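(* For every integer $m\ge1$, $$\sum_{i=0}^{\lfloor (m-1)/2\rfloor}(-1)^i\binom{2m}{m-1-2i}=\sum_{k=0}^{m-1}2^{m-1-k}\binom{2k}{k}.$$ *)

(* Defs.v *)
From HB Require Import structures.
From mathcomp Require Import all_boot all_order all_algebra.

(* Main.v *)
Require Import Defs.
From HB Require Import structures.
From mathcomp Require Import all_boot all_order all_algebra zify ring.
Import GRing.Theory Num.Theory.
Import GRing.Theory Num.Theory.


Definition D (m i : nat) : nat := if (2*i+1 <= m)%N then 'C(2 * m, m - 1 - 2 * i) else 0%N.
Definition E (m i : nat) : nat := if (2*i <= m)%N then 'C(2 * m, m - 2 * i) else 0%N.

Lemma keyDE m i : D m.+1 i = (E m i + 2 * D m i + E m i.+1)%N.
Proof.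
rewrite /D /E.
case: (leqP (2*i) m) => h; last first.
  by rewrite !ifF //; apply/negbTE; rewrite -ltnNge; lia.
have [j ->] : exists j, m = (j + 2*i)%N by exists (m - 2*i)%N; lia.
rewrite (_ : (2 * i + 1 <= (j + 2 * i).+1)%N = true); last by lia.
idtac.
rewrite (_ : (j + 2 * i).+1 - 1 - 2 * i = j)%N; last by lia.
rewrite (_ : (j + 2 * i) - 2 * i = j)%N; last by lia.
rewrite (_ : (2 * (j + 2 * i).+1) = (2 * (j + 2 * i)).+2)%N; last by lia.
set n := (2 * (j + 2 * i))%N.
clearbody n.
case: j => [|[|j]]; case: ifP => H1; case: ifP => H2; try lia.
- by rewrite !bin0.
- rewrite (_ : (1 + 2 * i - 1 - 2 * i = 0)%N); last by lia.
  by rewrite !binS !bin0; lia.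
- rewrite (_ : (j.+2 + 2 * i - 1 - 2 * i = j.+1)%N); last by lia.
  rewrite (_ : (j.+2 + 2 * i - 2 * i.+1 = j)%N); last by lia.
  rewrite !binS; lia.
Qed.

Local Open Scope ring_scope.

Definition G (m : nat) : int := \sum_(0 <= i < m) (-1) ^+ i * (D m i)%:Z.

Lemma tele (f : nat -> int) n :
  \sum_(0 <= i < n.+1) (-1) ^+ i * (f i + f i.+1) = f 0%N + (-1) ^+ n * f n.+1.
Proof.
elim: n => [|n IH]; first by rewrite big_nat1 expr0 !mul1r.
rewrite big_nat_recr //= IH exprS.
rewrite mulrDr; ring.
Qed.

Lemma Grec m : G m.+1 = 2 * G m + ('C(2 * m, m))%:Z.
Proof.
rewrite /G.
under eq_bigr => i _ do rewrite keyDE !PoszD.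
have -> : \sum_(0 <= i < m.+1) (-1) ^+ i * ((E m i)%:Z + (2%N * D m i)%:Z + (E m i.+1)%:Z)
  = \sum_(0 <= i < m.+1) (-1) ^+ i * ((E m i)%:Z + (E m i.+1)%:Z)
   + 2 * \sum_(0 <= i < m.+1) (-1) ^+ i * (D m i)%:Z.
  rewrite mulr_sumr -big_split /=; apply: eq_bigr => i _.
  rewrite PoszM; ring.
rewrite tele big_nat_recr //=.
have -> : D m m = 0%N by rewrite /D ifF //; apply/negbTE; rewrite -ltnNge; lia.
have -> : E m m.+1 = 0%N by rewrite /E ifF //; apply/negbTE; rewrite -ltnNge; lia.
rewrite /E /=.
rewrite muln0 subn0 !mulr0 !addr0 addrC; done.
Qed.

Definition Rs (m : nat) : int := \sum_(0 <= k < m) (2 ^ (m - 1 - k) * 'C(2 * k, k))%:Z.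

Lemma Rrec m : Rs m.+1 = 2 * Rs m + ('C(2 * m, m))%:Z.
Proof.
rewrite /Rs big_nat_recr //= (_ : (m.+1 - 1 - m = 0)%N); last by lia.
rewrite expn0 mul1n; congr (_ + _).
rewrite mulr_sumr; apply: eq_big_nat => k hk.
rewrite (_ : (m.+1 - 1 - k = (m - 1 - k).+1)%N); last by lia.
by rewrite expnS -mulnA PoszM.
Qed.

Lemma GR m : G m = Rs m.
Proof.
elim: m => [|m IH]; first by rewrite /G /Rs !big_geq.
by rewrite Grec Rrec IH.
Qed.

Theorem mainTheorem8 (m : nat) (hm : (1 <= m)%N) :
  \sum_(0 <= i < ((m - 1)./2).+1) (-1) ^+ i * ('C(2 * m, m - 1 - 2 * i))%:Z
  = \sum_(0 <= k < m) (2 ^ (m - 1 - k) * 'C(2 * k, k))%:Z.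
Proof.
rewrite -/(Rs m) -GR /G.
have hK : (((m - 1)./2).+1 <= m)%N by rewrite -divn2; lia.
rewrite [RHS](big_cat_nat _ (n := ((m - 1)./2).+1)) //=.
have -> : \sum_(((m - 1)./2).+1 <= i < m) (-1) ^+ i * (D m i)%:Z = 0.
  rewrite big_nat_cond big1 // => i /andP [/andP [h1 h2] _].
  rewrite /D ifF ?mulr0 //; apply/negbTE; rewrite -ltnNge.
  move: h1; rewrite -divn2; lia.
rewrite addr0.
apply: eq_big_nat => i hi.
rewrite /D ifT //; move: hi; rewrite -divn2; lia.
Qed.
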